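(* Let $E=(E^0,E^1,r,s)$ be a graph and $H\subseteq E^0$ a saturated hereditary subset. Then $|\widetilde{\partial}E|=|\widetilde{\partial}\,\overline{E}_{(H,\emptyset)}|+|\widetilde{\partial}\,(E\setminus(H,\emptyset))|$.
   Context: A graph $E=(E^0,E^1,r,s)$ has vertex set $E^0$, edge set $E^1$, range and source maps; no countability assumed. A vertex is singular if it emits no edges or infinitely many edges, regular otherwise. Boundary paths $\partial E$: infinite paths $e_1e_2\cdots$ ($r(e_i)=s(e_{i+1})$) together with finite paths (including vertices as length-$0$ paths) whose range is singular. The shift $\sigma_E$ removes the first edge (fixes vertices; sends a single edge $e$ to $r(e)$); $\alpha,\beta\in\partial E$ are shift-tail equivalent if $\sigma_E^m(\alpha)=\sigma_E^n(\beta)$ for some $m,n\in\mathbb{N}$, and $\widetilde{\partial}E$ is the set of shift-tail equivalence classes. $H\subseteq E^0$ is hereditary if $s(e)\in H\Rightarrow r(e)\in H$; saturated if every regular $v$ with $r(s^{-1}(v))\subseteq H$ lies in $H$. Breaking vertices: $B_H=\{v\in E^0\text{ singular}:0<|s^{-1}(v)\cap r^{-1}(E^0\setminus H)|<\infty\}$. The graph $E\setminus(H,\emptyset)$ has vertex set $(E^0\setminus H)\sqcup\{w_v:v\in B_H\}$ and edge set $(E^1\setminus r^{-1}(H))\sqcup\{f_e:e\in E^1,\ r(e)\in B_H\}$, with $r,s$ as in $E$ on the old edges, and $s(f_e)=s(e)$, $r(f_e)=w_{r(e)}$. Let $F_1(H,\emptyset)=\{\alpha=e_1\cdots e_n\in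 E^*: n\ge1,\ r(e_n)\in H,\ s(e_n)\notin H\}$ and let $\overline{F}_1(H,\emptyset)=\{\overline{\alpha}:\alpha\in F_1(H,\emptyset)\}$ be a disjoint copy. The graph $\overline{E}_{(H,\emptyset)}$ has vertex set $H\sqcup F_1(H,\emptyset)$ and edge set $\{e\in E^1:s(e)\in H\}\sqcup\overline{F}_1(H,\emptyset)$, with $r,s$ as in $E$ on the edges from $E$, and $s(\overline{\alpha})=\alpha$, $r(\overline{\alpha})=r(\alpha)$. *)

(* Defs.v *)
From Stdlib Require Import List Arith.
Import ListNotations.

Record graph := Graph {
  V : Type;
  Ed : Type;
  rg : Ed -> V;
  sr : Ed -> V
}.

Section GraphDefs.
Variable G : graph.

Definition regular (v : V G) : Prop :=
  (exists e : Ed G, sr G e = v) /\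
  (exists l : list (Ed G), forall e, sr G e = v -> In e l).

Definition singular (v : V G) : Prop := ~ regular v.

Definition hereditary (H : V G -> Prop) : Prop :=
  forall e : Ed G, H (sr G e) -> H (rg G e).

Definition saturated (H : V G -> Prop) : Prop :=
  forall v : V G, regular v -> (forall e, sr G e = v -> H (rg G e)) -> H v.

Definition breaking (H : V G -> Prop) (v : V G) : Prop :=
  singular v /\
  (exists e, sr G e = v /\ ~ H (rg G e)) /\
  (exists l : list (Ed G), forall e, sr G e = v -> ~ H (rg G e) -> In e l).

Fixpoint consec (e : Ed G) (l : list (Ed G)) : Prop :=
  match l with
  | [] => True
  | e' :: l' => rg G e = sr G e' /\ consec e' l'
  end.

(* raw paths: vertices (length 0), finite paths e::l of length >= 1, infinite paths *)
Inductive rpath : Type :=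
| rvert : V G -> rpath
| rfin : Ed G -> list (Ed G) -> rpath
| rinf : (nat -> Ed G) -> rpath.

Definition is_boundary (a : rpath) : Prop :=
  match a with
  | rvert v => singular v
  | rfin e l => consec e l /\ singular (rg G (last l e))
  | rinf f => forall n, rg G (f n) = sr G (f (S n))
  end.

Definition shift (a : rpath) : rpath :=
  match a with
  | rvert v => rvert v
  | rfin e [] => rvert (rg G e)
  | rfin _ (e' :: l) => rfin e' l
  | rinf f => rinf (fun n => f (S n))
  end.

Definition shift_tail_eq (a b : rpath) : Prop :=
  exists m n : nat, Nat.iter m shift a = Nat.iter n shift b.

(* shift-tail equivalence classes of boundary paths, as sets of boundary paths *)
Definition bclass : Type :=
  { P : rpath -> Prop |
    exists a, is_boundary a /\ P = (fun b => is_boundary b /\ shift_tail_eq a b) }.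

Definition F1 (H : V G -> Prop) (p : Ed G * list (Ed G)) : Prop :=
  consec (fst p) (snd p) /\ H (rg G (last (snd p) (fst p)))
  /\ ~ H (sr G (last (snd p) (fst p))).

End GraphDefs.

Arguments rvert {G}. Arguments rfin {G}. Arguments rinf {G}.

Section Quot.
Variables (E : graph) (H : V E -> Prop) (hH : hereditary E H).

Definition Q_V : Type := ({v : V E | ~ H v} + {v : V E | breaking E H v})%type.
Definition Q_Ed : Type :=
  ({e : Ed E | ~ H (rg E e)} + {e : Ed E | breaking E H (rg E e)})%type.

Lemma Q_src_ok1 (e : Ed E) : ~ H (rg E e) -> ~ H (sr E e).
Proof. intros h1 h2. apply h1. apply hH. exact h2. Qed.

Lemma Q_src_ok2 (e : Ed E) : breaking E H (rg E e) -> ~ H (sr E e).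
Proof.
  intros [_ [[e' [he' hne']] _]] h. apply Q_src_ok1 with e; [|exact h].
  intro hr. apply hne'. apply hH. rewrite he'. exact hr.
Qed.

Definition Q_rg (x : Q_Ed) : Q_V :=
  match x with
  | inl (exist _ e p) => inl (exist _ (rg E e) p)
  | inr (exist _ e p) => inr (exist _ (rg E e) p)   (* r(f_e) = w_{r(e)} *)
  end.

Definition Q_sr (x : Q_Ed) : Q_V :=
  match x with
  | inl (exist _ e p) => inl (exist _ (sr E e) (Q_src_ok1 e p))
  | inr (exist _ e p) => inl (exist _ (sr E e) (Q_src_ok2 e p))
  end.

Definition EminusH : graph := Graph Q_V Q_Ed Q_rg Q_sr.

Definition B_V : Type :=
  ({v : V E | H v} + {p : Ed E * list (Ed E) | F1 E H p})%type.
Definition B_Ed : Type :=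
  ({e : Ed E | H (sr E e)} + {p : Ed E * list (Ed E) | F1 E H p})%type.

Definition B_rg (x : B_Ed) : B_V :=
  match x with
  | inl (exist _ e p) => inl (exist _ (rg E e) (hH e p))
  | inr (exist _ a p) => inl (exist _ (rg E (last (snd a) (fst a))) (proj1 (proj2 p)))
  end.

Definition B_sr (x : B_Ed) : B_V :=
  match x with
  | inl (exist _ e p) => inl (exist _ (sr E e) p)
  | inr a => inr a
  end.

Definition Ebar : graph := Graph B_V B_Ed B_rg B_sr.

End Quot.

Definition card_eq (A B : Type) : Prop :=
  exists f : A -> B, (forall x y, f x = f y -> x = y) /\ (forall y, exists x, f x = y).

(* Main.v *)
Require Import Defs.
From Stdlib Require Import List Arith Lia Classical ClassicalEpsilon FunctionalExtensionality PropExtensionality ProofIrrelevance.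
Import ListNotations.

Lemma sig_eq {T} {P : T -> Prop} (x y : sig P) : proj1_sig x = proj1_sig y -> x = y.
Proof. destruct x as [x px], y as [y py]; simpl; intros ->. f_equal. apply proof_irrelevance. Qed.

Lemma last_cons {A} (l : list A) (a d : A) : last (a :: l) d = last l a.
Proof.
  revert a d; induction l as [|b l IH]; intros a d; [reflexivity|].
  change (last (b::l) d = last (b::l) a). rewrite !IH. reflexivity.
Qed.

Lemma last_map {A B} (f : A -> B) l a : last (map f l) (f a) = f (last l a).
Proof.
  revert a; induction l as [|b l IH]; intros a; [reflexivity|].
  change (last (f b :: map f l) (f a) = f (last (b :: l) a)).
  rewrite !last_cons, IH. reflexivity.
Qed.

Lemma iter_S {A} (f : A -> A) n x : Nat.iter (S n) f x = Nat.iter n f (f x).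
Proof. induction n; simpl in *; [reflexivity|]. rewrite <- IHn. reflexivity. Qed.

Lemma iter_add {A} (f : A -> A) m n x : Nat.iter (m + n) f x = Nat.iter m f (Nat.iter n f x).
Proof. induction m; simpl; congruence. Qed.

Lemma iter_comm {A} (f : A -> A) m n x : Nat.iter m f (Nat.iter n f x) = Nat.iter n f (Nat.iter m f x).
Proof. rewrite <- !iter_add, Nat.add_comm. reflexivity. Qed.

Section G.
Variable G : graph.

Lemma shift_bd a : is_boundary G a -> is_boundary G (shift G a).
Proof.
  destruct a as [v|e l|f]; simpl; auto.
  destruct l as [|e' l].
  - intros [_ h]; exact h.
  - intros [[h1 h2] h3]. split; [exact h2|]. rewrite last_cons in h3. exact h3.
Qed.

Lemma iter_bd n a : is_boundary G a -> is_boundary G (Nat.iter n (shift G) a).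
Proof. intro h; induction n; simpl; auto using shift_bd. Qed.

Lemma ste_refl a : shift_tail_eq G a a.
Proof. exists 0, 0. reflexivity. Qed.
Lemma ste_sym a b : shift_tail_eq G a b -> shift_tail_eq G b a.
Proof. intros [m [n h]]. exists n, m. auto. Qed.
Lemma ste_trans a b c : shift_tail_eq G a b -> shift_tail_eq G b c -> shift_tail_eq G a c.
Proof.
  intros [m [n h]] [p [q h']]. exists (p + m), (n + q).
  rewrite !iter_add, h, iter_comm, h'. reflexivity.
Qed.
Lemma ste_iter a m : shift_tail_eq G a (Nat.iter m (shift G) a).
Proof. exists m, 0. reflexivity. Qed.

Lemma iter_fin_vert (e : Ed G) l :
  Nat.iter (S (length l)) (shift G) (rfin e l) = rvert (rg G (last l e)).
Proof.
  revert e; induction l as [|a l IH]; intros e; [reflexivity|].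
  rewrite iter_S. change (shift G (rfin e (a::l))) with (rfin a l).
  change (length (a::l)) with (S (length l)). rewrite IH, last_cons. reflexivity.
Qed.

Lemma iter_inf (f : nat -> Ed G) m :
  Nat.iter m (shift G) (rinf f) = rinf (fun k => f (k + m)).
Proof.
  induction m; simpl.
  - f_equal. extensionality k. rewrite Nat.add_0_r. reflexivity.
  - rewrite IHm. simpl. f_equal. extensionality k. f_equal. lia.
Qed.
End G.

Section Morph.
Variables (G1 G2 : graph) (vm : V G1 -> V G2) (em : Ed G1 -> Ed G2).
Hypotheses (hr : forall e, vm (rg G1 e) = rg G2 (em e))
           (hs : forall e, vm (sr G1 e) = sr G2 (em e)).

Definition pmap (a : rpath G1) : rpath G2 :=
  match a with
  | rvert v => rvert (vm v)
  | rfin e l => rfin (em e) (map em l)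
  | rinf f => rinf (fun n => em (f n))
  end.

Lemma pmap_shift a : pmap (shift G1 a) = shift G2 (pmap a).
Proof. destruct a as [v|e [|e' l]|f]; simpl; try reflexivity. rewrite hr; reflexivity. Qed.

Lemma pmap_iter n a : pmap (Nat.iter n (shift G1) a) = Nat.iter n (shift G2) (pmap a).
Proof. induction n; simpl; [reflexivity|]. rewrite pmap_shift, IHn. reflexivity. Qed.

Lemma consec_map e l : consec G1 e l -> consec G2 (em e) (map em l).
Proof.
  revert e; induction l as [|a l IH]; intros e; simpl; auto.
  intros [h1 h2]; split; [|auto]. rewrite <- hr, <- hs, h1. reflexivity.
Qed.

Lemma pmap_bd (hsing : forall v, singular G1 v -> singular G2 (vm v)) a :
  is_boundary G1 a -> is_boundary G2 (pmap a).
Proof.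
  destruct a as [v|e l|f]; simpl.
  - apply hsing.
  - intros [h1 h2]. split; [apply consec_map; exact h1|].
    rewrite last_map, <- hr. apply hsing. exact h2.
  - intros h n. rewrite <- hr, <- hs, h. reflexivity.
Qed.

Lemma pmap_ste a b : shift_tail_eq G1 a b -> shift_tail_eq G2 (pmap a) (pmap b).
Proof. intros [m [n h]]. exists m, n. rewrite <- !pmap_iter, h. reflexivity. Qed.

Lemma pmap_ste_rev
  (hinj : forall x y, is_boundary G1 x -> is_boundary G1 y -> pmap x = pmap y ->
          shift_tail_eq G1 x y) a b :
  is_boundary G1 a -> is_boundary G1 b ->
  shift_tail_eq G2 (pmap a) (pmap b) -> shift_tail_eq G1 a b.
Proof.
  intros ha hb [m [n h]]. rewrite <- !pmap_iter in h.
  apply hinj in h; try apply iter_bd; auto.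
  eapply ste_trans; [apply ste_iter|]. eapply ste_trans; [exact h|].
  apply ste_sym, ste_iter.
Qed.
End Morph.

Section Cls.
Variables (A : Type) (bA : A -> Prop) (RA : A -> A -> Prop).
Hypotheses (Rrefl : forall a, RA a a) (Rsym : forall a b, RA a b -> RA b a)
  (Rtrans : forall a b c, RA a b -> RA b c -> RA a c).
Definition cls := {P : A -> Prop | exists a, bA a /\ P = (fun b => bA b /\ RA a b)}.
Definition mk a (h : bA a) : cls :=
  exist _ (fun b => bA b /\ RA a b) (ex_intro _ a (conj h eq_refl)).
Lemma mk_eq a a' h h' : RA a a' -> mk a h = mk a' h'.
Proof.
  intro r. apply sig_eq; simpl. extensionality b. apply propositional_extensionality.
  split; intros [hb r']; split; eauto.
Qed.
Lemma mk_inv a a' h h' : mk a h = mk a' h' -> RA a a'.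
Proof.
  intro e. apply (f_equal (@proj1_sig _ _)) in e. simpl in e.
  apply (f_equal (fun P => P a')) in e.
  assert (bA a' /\ RA a a') as [_ r]; [|exact r].
  rewrite e. split; [exact h'|]. eauto.
Qed.
Definition rep (P : cls) : A := proj1_sig (constructive_indefinite_description _ (proj2_sig P)).
Lemma rep_spec P : bA (rep P) /\ proj1_sig P = (fun b => bA b /\ RA (rep P) b).
Proof. unfold rep. destruct (constructive_indefinite_description _ _) as [a ha]. exact ha. Qed.
Lemma rep_mk P h : P = mk (rep P) h.
Proof. apply sig_eq. simpl. apply rep_spec. Qed.
End Cls.

Lemma card_inv {X Y} (g : X -> Y) :
  (forall x y, g x = g y -> x = y) -> (forall y, exists x, g x = y) -> card_eq Y X.
Proof.
  intros inj sur.
  exists (fun y => proj1_sig (constructive_indefinite_description _ (sur y))). split.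
  - intros y y'. destruct (constructive_indefinite_description _ (sur y)) as [x hx].
    destruct (constructive_indefinite_description _ (sur y')) as [x' hx']; simpl.
    intros ->. congruence.
  - intros x. exists (g x). destruct (constructive_indefinite_description _ (sur (g x))) as [x' hx'].
    simpl. apply inj; exact hx'.
Qed.

Section Sum.
Variables (A : Type) (bA : A -> Prop) (RA : A -> A -> Prop)
  (B1 : Type) (bB1 : B1 -> Prop) (RB1 : B1 -> B1 -> Prop)
  (B2 : Type) (bB2 : B2 -> Prop) (RB2 : B2 -> B2 -> Prop)
  (p1 : B1 -> A) (p2 : B2 -> A).
Hypotheses (Rrefl : forall a, RA a a) (Rsym : forall a b, RA a b -> RA b a)
  (Rtrans : forall a b c, RA a b -> RA b c -> RA a c)
  (R1refl : forall a, RB1 a a) (R2refl : forall a, RB2 a a)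
  (R1sym : forall a b, RB1 a b -> RB1 b a)
  (R1trans : forall a b c, RB1 a b -> RB1 b c -> RB1 a c)
  (R2sym : forall a b, RB2 a b -> RB2 b a)
  (R2trans : forall a b c, RB2 a b -> RB2 b c -> RB2 a c)
  (pres1 : forall b, bB1 b -> bA (p1 b))
  (pres2 : forall b, bB2 b -> bA (p2 b))
  (fw1 : forall b b', bB1 b -> bB1 b' -> RB1 b b' -> RA (p1 b) (p1 b'))
  (fw2 : forall b b', bB2 b -> bB2 b' -> RB2 b b' -> RA (p2 b) (p2 b'))
  (bw1 : forall b b', bB1 b -> bB1 b' -> RA (p1 b) (p1 b') -> RB1 b b')
  (bw2 : forall b b', bB2 b -> bB2 b' -> RA (p2 b) (p2 b') -> RB2 b b')
  (disj : forall b b', bB1 b -> bB2 b' -> ~ RA (p1 b) (p2 b'))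
  (sur : forall a, bA a -> (exists b, bB1 b /\ RA a (p1 b)) \/ (exists b, bB2 b /\ RA a (p2 b))).

Lemma card_sum : card_eq (cls A bA RA) (cls B1 bB1 RB1 + cls B2 bB2 RB2)%type.
Proof.
  pose (g := fun s => match s with
    | inl P => mk A bA RA (p1 (rep B1 bB1 RB1 P)) (pres1 _ (proj1 (rep_spec B1 bB1 RB1 P)))
    | inr P => mk A bA RA (p2 (rep B2 bB2 RB2 P)) (pres2 _ (proj1 (rep_spec B2 bB2 RB2 P)))
    end).
  apply (card_inv g).
  - intros [P|P] [P'|P']; simpl; intro e; apply mk_inv in e; auto; try exact Rrefl.
    + f_equal. rewrite (rep_mk _ _ _ P (proj1 (rep_spec _ _ _ P))),
        (rep_mk _ _ _ P' (proj1 (rep_spec _ _ _ P'))).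
      apply mk_eq; auto. apply bw1; auto; apply rep_spec.
    + exfalso. eapply disj; [| |exact e]; apply rep_spec.
    + exfalso. eapply disj; [| |apply Rsym; exact e]; apply rep_spec.
    + f_equal. rewrite (rep_mk _ _ _ P (proj1 (rep_spec _ _ _ P))),
        (rep_mk _ _ _ P' (proj1 (rep_spec _ _ _ P'))).
      apply mk_eq; auto. apply bw2; auto; apply rep_spec.
  - intros C. destruct (rep_spec _ _ _ C) as [hC _].
    rewrite (rep_mk _ _ _ C hC).
    destruct (sur _ hC) as [[b [hb r]]|[b [hb r]]].
    + exists (inl (mk _ _ _ b hb)). simpl. apply mk_eq; auto.
      set (P := mk B1 bB1 RB1 b hb).
      assert (RB1 b (rep _ _ _ P)) as r'.
      { eapply (mk_inv B1 bB1 RB1); [ .. | apply (rep_mk _ _ _ P (proj1 (rep_spec _ _ _ P)))]; auto. }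
      apply Rsym. eapply Rtrans; [exact r|]. apply fw1; auto. apply rep_spec.
    + exists (inr (mk _ _ _ b hb)). simpl. apply mk_eq; auto.
      set (P := mk B2 bB2 RB2 b hb).
      assert (RB2 b (rep _ _ _ P)) as r'.
      { eapply (mk_inv B2 bB2 RB2); [ .. | apply (rep_mk _ _ _ P (proj1 (rep_spec _ _ _ P)))]; auto. }
      apply Rsym. eapply Rtrans; [exact r|]. apply fw2; auto. apply rep_spec.
Qed.
End Sum.

Lemma fin_pull {X Y} (g : Y -> X) (P : X -> Prop) (Q : Y -> Prop) :
  (exists L, forall x, P x -> In x L) -> (forall y, Q y -> P (g y)) ->
  (forall x, exists Lx, forall y, Q y -> g y = x -> In y Lx) ->
  exists L', forall y, Q y -> In y L'.
Proof.
  intros [L hL] hQP hpre.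
  assert (exists L', forall y, Q y -> In (g y) L -> In y L') as [L' hL'].
  { clear hL. induction L as [|x L IH].
    - exists []. intros y _ [].
    - destruct IH as [L' hL']. destruct (hpre x) as [Lx hLx].
      exists (Lx ++ L'). intros y hy [e|i]; apply in_or_app; [left|right]; auto. }
  exists L'. auto.
Qed.

Section Main.
Variables (E : graph) (H : V E -> Prop) (hH : hereditary E H) (sH : saturated E H).

Definition vm1 (x : B_V E H) : V E :=
  match x with inl v => proj1_sig v | inr p => sr E (last (snd (proj1_sig p)) (fst (proj1_sig p))) end.
Definition em1 (x : B_Ed E H) : Ed E :=
  match x with inl e => proj1_sig e | inr p => last (snd (proj1_sig p)) (fst (proj1_sig p)) end.
Lemma hr1 (e : Ed (Ebar E H hH)) : vm1 (rg (Ebar E H hH) e) = rg E (em1 e).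
Proof. destruct e as [[e p]|[a p]]; reflexivity. Qed.
Lemma hs1 (e : Ed (Ebar E H hH)) : vm1 (sr (Ebar E H hH) e) = sr E (em1 e).
Proof. destruct e as [[e p]|[a p]]; reflexivity. Qed.

Definition vm2 (x : Q_V E H) : V E := match x with inl v => proj1_sig v | inr v => proj1_sig v end.
Definition em2 (x : Q_Ed E H) : Ed E := match x with inl v => proj1_sig v | inr v => proj1_sig v end.
Lemma hr2 (e : Ed (EminusH E H hH)) : vm2 (rg (EminusH E H hH) e) = rg E (em2 e).
Proof. destruct e as [[e p]|[e p]]; reflexivity. Qed.
Lemma hs2 (e : Ed (EminusH E H hH)) : vm2 (sr (EminusH E H hH) e) = sr E (em2 e).
Proof. destruct e as [[e p]|[e p]]; reflexivity. Qed.

Lemma breaking_notH v : breaking E H v -> ~ H v.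
Proof. intros [_ [[e [he hn]] _]] h. apply hn. apply hH. rewrite he. exact h. Qed.

Lemma vm2_notH x : ~ H (vm2 x).
Proof. destruct x as [[v p]|[v p]]; simpl; auto using breaking_notH. Qed.

Lemma reg_inr a : regular (Ebar E H hH) (inr a).
Proof.
  split.
  - exists (inr a). reflexivity.
  - exists [inr a]. intros [[e p]|b] h; simpl in h; [discriminate|].
    injection h as ->. left. reflexivity.
Qed.

Lemma sing_Eb_E x : singular (Ebar E H hH) x -> singular E (vm1 x).
Proof.
  intros hs hr. apply hs. destruct x as [[v h]|a]; [|apply reg_inr].
  simpl in hr. destruct hr as [[e he] hl]. split.
  - assert (H (sr E e)) as p by (rewrite he; exact h).
    exists (inl (exist _ e p)). simpl. f_equal. apply sig_eq. simpl. exact he.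
  - apply (fin_pull em1 (fun e => sr E e = v) (fun y => B_sr E H y = inl (exist _ v h)) hl).
    + intros y hy. rewrite <- (hs1 y). change (vm1 (B_sr E H y) = v). rewrite hy. reflexivity.
    + clear e he. intros e. destruct (classic (H (sr E e))) as [p|np].
      * exists [inl (exist _ e p)]. intros [[e' p']|b] hy he'; simpl in *; [|discriminate].
        subst e'. left. f_equal. apply sig_eq. reflexivity.
      * exists []. intros [[e' p']|b] hy he'; simpl in *; [|discriminate]. subst. contradiction.
Qed.

Lemma sing_E_Eb v (h : H v) : singular E v -> singular (Ebar E H hH) (inl (exist _ v h)).
Proof.
  intros hs hr. apply hs. destruct hr as [[x hx] [L hL]]. split.
  - destruct x as [[e p]|a]; simpl in hx; [|discriminate].
    injection hx as hx. exists e. exact hx.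
  - exists (map em1 L). intros e he.
    assert (H (sr E e)) as p by (rewrite he; exact h).
    change e with (em1 (inl (exist _ e p))). apply in_map, hL.
    simpl. f_equal. apply sig_eq. exact he.
Qed.

Lemma rg_inl (x : B_Ed E H) : exists v, B_rg E H hH x = inl v.
Proof. destruct x as [[e p]|[a p]]; eexists; reflexivity. Qed.

Lemma em1_inj (a b : {e | H (sr E e)}) : em1 (inl a) = em1 (inl b) -> a = b.
Proof. intro h. apply sig_eq. exact h. Qed.

Lemma vm1_inj_inl (a b : B_V E H) u w : a = inl u -> b = inl w -> vm1 a = vm1 b -> a = b.
Proof. intros -> ->. simpl. intro h. f_equal. apply sig_eq. exact h. Qed.

Lemma Blist l : forall x y l', consec (Ebar E H hH) x l -> consec (Ebar E H hH) y l' ->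
  map em1 l = map em1 l' -> l = l'.
Proof.
  induction l as [|a l IH]; intros x y [|b l'] hx hy hm; simpl in *; try discriminate; auto.
  destruct hx as [hx1 hx2], hy as [hy1 hy2]. injection hm as hab hm.
  destruct (rg_inl x) as [u hu], (rg_inl y) as [w hw].
  destruct a as [a|a]; [|simpl in hx1; congruence].
  destruct b as [b|b]; [|simpl in hy1; congruence].
  f_equal; [f_equal; apply em1_inj; exact hab|].
  eapply IH; eauto.
Qed.

Lemma Eb_inj x y : is_boundary (Ebar E H hH) x -> is_boundary (Ebar E H hH) y ->
  pmap (Ebar E H hH) E vm1 em1 x = pmap (Ebar E H hH) E vm1 em1 y -> shift_tail_eq (Ebar E H hH) x y.
Proof.
  destruct x as [u|x l|f], y as [w|y l'|g]; simpl; intros hx hy hm; try discriminate.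
  - injection hm as hm. destruct u as [u|u]; [|exfalso; exact (hx (reg_inr _))].
    destruct w as [w|w]; [|exfalso; exact (hy (reg_inr _))].
    assert (inl u = inl w :> B_V E H) as -> by (eapply vm1_inj_inl; eauto).
    apply ste_refl.
  - injection hm as hm1 hm2. exists 1, 1. simpl.
    destruct l as [|a l], l' as [|b l']; simpl in hm2; try discriminate.
    + destruct (rg_inl x) as [u hu], (rg_inl y) as [w hw]. f_equal.
      eapply vm1_inj_inl; eauto. change (vm1 (rg (Ebar E H hH) x) = vm1 (rg (Ebar E H hH) y)).
      rewrite !hr1. congruence.
    + destruct hx as [hx _], hy as [hy _].
      assert (a :: l = b :: l') as e by (eapply Blist; eauto). injection e as -> ->.
      reflexivity.
  - injection hm as hm. exists 1, 1. simpl. f_equal. extensionality n.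
    assert (forall (f : nat -> B_Ed E H), (forall n, B_rg E H hH (f n) = B_sr E H (f (S n))) ->
            forall n, exists a, f (S n) = inl a) as inlS.
    { intros h hh k. destruct (rg_inl (h k)) as [u hu]. rewrite hh in hu.
      destruct (h (S k)) as [a|a]; simpl in hu; [eauto|discriminate]. }
    destruct (inlS f hx n) as [a ha], (inlS g hy n) as [b hb]. rewrite ha, hb.
    f_equal. apply em1_inj. rewrite <- ha, <- hb. exact (equal_f hm (S n)).
Qed.

Lemma em2_pre e : exists Lx, forall y, em2 y = e -> In y Lx.
Proof.
  destruct (classic (H (rg E e))) as [h|nh];
  destruct (classic (breaking E H (rg E e))) as [b|nb].
  - exfalso. exact (breaking_notH _ b h).
  - exists []. intros [[e' p]|[e' p]] he; simpl in he; subst; contradiction.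
  - exists [inl (exist _ e nh); inr (exist _ e b)].
    intros [[e' p]|[e' p]] he; simpl in he; subst.
    + left. f_equal. apply sig_eq. reflexivity.
    + right. left. f_equal. apply sig_eq. reflexivity.
  - exists [inl (exist _ e nh)].
    intros [[e' p]|[e' p]] he; simpl in he; subst; [|contradiction].
    left. f_equal. apply sig_eq. reflexivity.
Qed.

Lemma Qreg_of v (nh : ~ H v) :
  (exists e, sr E e = v /\ ~ H (rg E e)) ->
  (exists L, forall e, sr E e = v -> In e L) ->
  regular (EminusH E H hH) (inl (exist _ v nh)).
Proof.
  intros [e [he hn]] hL. split.
  - exists (inl (exist _ e hn)). simpl. f_equal. apply sig_eq. exact he.
  - apply (fin_pull em2 (fun e => sr E e = v) (fun y => Q_sr E H hH y = inl (exist _ v nh)) hL).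
    + intros y hy. rewrite <- (hs2 y). change (vm2 (Q_sr E H hH y) = v). rewrite hy. reflexivity.
    + intros x. destruct (em2_pre x) as [Lx hLx]. exists Lx. auto.
Qed.

Lemma breaking_reg v (nh : ~ H v) : breaking E H v -> regular (EminusH E H hH) (inl (exist _ v nh)).
Proof.
  intros hb. pose proof hb as [_ [hex [L hL]]]. split.
  - destruct hex as [e [he hn]]. exists (inl (exist _ e hn)). simpl. f_equal. apply sig_eq. exact he.
  - apply (fin_pull em2 (fun e => sr E e = v /\ ~ H (rg E e))
           (fun y => Q_sr E H hH y = inl (exist _ v nh))).
    + exists L. intros e [h1 h2]. auto.
    + intros y hy. split.
      * rewrite <- (hs2 y). change (vm2 (Q_sr E H hH y) = v). rewrite hy. reflexivity.
      * rewrite <- (hr2 y). apply vm2_notH.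
    + intros x. destruct (em2_pre x) as [Lx hLx]. exists Lx. auto.
Qed.

Lemma sing_Q_E x : singular (EminusH E H hH) x -> singular E (vm2 x).
Proof.
  intros hs hr. destruct x as [[v nh]|[v b]]; simpl in hr.
  - apply hs. apply Qreg_of; [|apply hr].
    apply NNPP. intro hn. apply nh. apply sH; [exact hr|].
    intros e he. apply NNPP. intro hh. apply hn. eauto.
  - exact (proj1 b hr).
Qed.

Lemma sing_E_Q v (nh : ~ H v) : singular E v -> ~ breaking E H v ->
  singular (EminusH E H hH) (inl (exist _ v nh)).
Proof.
  intros hs nb [[x hx] [L hL]]. apply nb. split; [exact hs|]. split.
  - exists (em2 x). split.
    + rewrite <- hs2. rewrite hx. reflexivity.
    + rewrite <- hr2. apply vm2_notH.
  - exists (map em2 L). intros e he hn.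
    change e with (em2 (inl (exist _ e hn))). apply in_map, hL.
    simpl. f_equal. apply sig_eq. exact he.
Qed.

Lemma sing_inr w : singular (EminusH E H hH) (inr w).
Proof. intros [[[[e p]|[e p]] hx] _]; discriminate. Qed.

Lemma em2_inj x y : (exists v, Q_rg E H x = inl v) -> (exists v, Q_rg E H y = inl v) ->
  em2 x = em2 y -> x = y.
Proof.
  intros [u hu] [w hw]. destruct x as [[x p]|[x p]]; simpl in hu; try discriminate.
  destruct y as [[y q]|[y q]]; simpl in hw; try discriminate.
  simpl. intro h. f_equal. apply sig_eq. exact h.
Qed.

Lemma sr_inl x : exists v, Q_sr E H hH x = inl v.
Proof. destruct x as [[e p]|[e p]]; eexists; reflexivity. Qed.

Lemma Qlist l : forall x y l', consec (EminusH E H hH) x l -> consec (EminusH E H hH) y l' ->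
  em2 x = em2 y -> map em2 l = map em2 l' ->
  singular (EminusH E H hH) (Q_rg E H (last l x)) ->
  singular (EminusH E H hH) (Q_rg E H (last l' y)) -> x = y /\ l = l'.
Proof.
  induction l as [|a l IH]; intros x y [|b l'] hx hy he hm sx sy; simpl in hx, hy, hm; try discriminate.
  - split; [|reflexivity].
    destruct x as [[x p]|[x p]], y as [[y q]|[y q]]; simpl in he; subst.
    + f_equal. apply sig_eq. reflexivity.
    + exfalso. exact (sx (breaking_reg _ _ q)).
    + exfalso. exact (sy (breaking_reg _ _ p)).
    + f_equal. apply sig_eq. reflexivity.
  - destruct hx as [hx1 hx2], hy as [hy1 hy2]. injection hm as hab hm.
    rewrite last_cons in sx, sy.
    assert (x = y) as ->.
    { apply em2_inj; auto.
      - destruct (sr_inl a) as [v hv]. exists v. rewrite hx1. exact hv.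
      - destruct (sr_inl b) as [v hv]. exists v. rewrite hy1. exact hv. }
    destruct (IH a b l' hx2 hy2 hab hm sx sy) as [-> ->]. auto.
Qed.

Lemma Q_inj x y : is_boundary (EminusH E H hH) x -> is_boundary (EminusH E H hH) y ->
  pmap (EminusH E H hH) E vm2 em2 x = pmap (EminusH E H hH) E vm2 em2 y -> shift_tail_eq (EminusH E H hH) x y.
Proof.
  intros hx hy hm. cut (x = y); [intros ->; apply ste_refl|].
  destruct x as [u|x l|f], y as [w|y l'|g]; simpl in *; try discriminate.
  - injection hm as hm.
    destruct u as [[u p]|[u p]], w as [[w q]|[w q]]; simpl in hm; subst.
    + f_equal. f_equal. apply sig_eq. reflexivity.
    + exfalso. exact (hx (breaking_reg _ _ q)).
    + exfalso. exact (hy (breaking_reg _ _ p)).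
    + f_equal. f_equal. apply sig_eq. reflexivity.
  - injection hm as hm1 hm2. destruct hx as [hx1 hx2], hy as [hy1 hy2].
    destruct (Qlist l x y l' hx1 hy1 hm1 hm2 hx2 hy2) as [-> ->]. reflexivity.
  - injection hm as hm. f_equal. extensionality n. apply em2_inj.
    + destruct (sr_inl (f (S n))) as [v hv]. exists v. rewrite hx. exact hv.
    + destruct (sr_inl (g (S n))) as [v hv]. exists v. rewrite hy. exact hv.
    + exact (equal_f hm n).
Qed.

End Main.

Section Main2.
Variables (E : graph) (H : V E -> Prop) (hH : hereditary E H) (sH : saturated E H).

Definition TH (a : rpath E) : Prop :=
  match a with
  | rvert v => H v
  | rfin e l => H (rg E (last l e))
  | rinf f => exists n, H (rg E (f n))
  end.

Lemma TH_shift a : is_boundary E a -> (TH a <-> TH (shift E a)).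
Proof.
  destruct a as [v|e [|e' l]|f]; intro hb; try reflexivity.
  - change (H (rg E (last (e'::l) e)) <-> H (rg E (last l e'))). rewrite last_cons. reflexivity.
  - simpl in *. split.
    + intros [n h]. exists n. apply hH. rewrite <- hb. exact h.
    + intros [n h]. eauto.
Qed.

Lemma TH_iter n a : is_boundary E a -> (TH a <-> TH (Nat.iter n (shift E) a)).
Proof.
  intro hb. induction n; simpl; [reflexivity|].
  rewrite IHn. apply TH_shift. apply iter_bd. exact hb.
Qed.

Lemma TH_ste a b : is_boundary E a -> is_boundary E b -> shift_tail_eq E a b -> (TH a <-> TH b).
Proof.
  intros ha hb [m [n h]]. rewrite (TH_iter m a ha), (TH_iter n b hb), h. reflexivity.
Qed.

Lemma vm1_rg_H (e : Ed (Ebar E H hH)) : H (vm1 E H (rg (Ebar E H hH) e)).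
Proof. destruct e as [[e p]|[a p]]; simpl; [apply hH; exact p| exact (proj1 (proj2 p))]. Qed.

Lemma TH1 x : is_boundary (Ebar E H hH) x -> TH (pmap (Ebar E H hH) E (vm1 E H) (em1 E H) x).
Proof.
  destruct x as [u|x l|f]; simpl; intro hb.
  - destruct u as [[u p]|u]; [exact p|]. exfalso. exact (hb (reg_inr E H hH _)).
  - rewrite last_map, <- (hr1 E H hH). apply vm1_rg_H.
  - exists 0. rewrite <- (hr1 E H hH). apply vm1_rg_H.
Qed.

Lemma TH2 x : ~ TH (pmap (EminusH E H hH) E (vm2 E H) (em2 E H) x).
Proof.
  destruct x as [u|x l|f]; simpl.
  - apply vm2_notH; auto.
  - rewrite last_map, <- (hr2 E H hH). apply vm2_notH; auto.
  - intros [n h]. rewrite <- (hr2 E H hH) in h. exact (vm2_notH E H hH _ h).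
Qed.

Lemma vert_case v : singular E v ->
  (exists b, is_boundary (Ebar E H hH) b /\
     shift_tail_eq E (rvert v) (pmap (Ebar E H hH) E (vm1 E H) (em1 E H) b)) \/
  (exists b, is_boundary (EminusH E H hH) b /\
     shift_tail_eq E (rvert v) (pmap (EminusH E H hH) E (vm2 E H) (em2 E H) b)).
Proof.
  intro hs. destruct (classic (H v)) as [h|nh].
  - left. exists (rvert (G := Ebar E H hH) (inl (exist _ v h))). split; [apply sing_E_Eb; exact hs|apply ste_refl].
  - right. destruct (classic (breaking E H v)) as [b|nb].
    + exists (rvert (G := EminusH E H hH) (inr (exist _ v b))). split; [apply sing_inr|apply ste_refl].
    + exists (rvert (G := EminusH E H hH) (inl (exist _ v nh))). split; [apply sing_E_Q; auto|apply ste_refl].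
Qed.

Lemma surj a : is_boundary E a ->
  (exists b, is_boundary (Ebar E H hH) b /\
     shift_tail_eq E a (pmap (Ebar E H hH) E (vm1 E H) (em1 E H) b)) \/
  (exists b, is_boundary (EminusH E H hH) b /\
     shift_tail_eq E a (pmap (EminusH E H hH) E (vm2 E H) (em2 E H) b)).
Proof.
  destruct a as [v|e l|f]; simpl; intro ha.
  - apply vert_case. exact ha.
  - destruct ha as [_ hs].
    assert (shift_tail_eq E (rfin e l) (rvert (rg E (last l e)))) as r.
    { rewrite <- iter_fin_vert. apply ste_iter. }
    destruct (vert_case _ hs) as [[b [hb r']]|[b [hb r']]]; [left|right];
      exists b; split; auto; eapply ste_trans; eauto.
  - destruct (classic (exists n, H (rg E (f n)))) as [[n hn]|hn].
    + left.
      assert (forall k, H (sr E (f (k + S n)))) as Hk.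
      { induction k; simpl.
        - rewrite <- ha. exact hn.
        - rewrite <- ha. apply hH. exact IHk. }
      exists (rinf (G := Ebar E H hH) (fun k => inl (exist _ (f (k + S n)) (Hk k)))). split.
      * intro k. simpl. f_equal. apply sig_eq. simpl. apply ha.
      * exists (S n), 0. rewrite iter_inf. reflexivity.
    + right.
      assert (forall n, ~ H (rg E (f n))) as hn' by (intros n h; apply hn; eauto).
      exists (rinf (G := EminusH E H hH) (fun n => inl (exist _ (f n) (hn' n)))). split.
      * intro k. simpl. f_equal. apply sig_eq. simpl. apply ha.
      * apply ste_refl.
Qed.
End Main2.

Theorem lemma6p2 (E : graph) (H : V E -> Prop)
  (hH : hereditary E H) (sH : saturated E H) :
  card_eq (bclass E) (bclass (Ebar E H hH) + bclass (EminusH E H hH))%type.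
Proof.
  change (card_eq (cls (rpath E) (is_boundary E) (shift_tail_eq E))
    (cls (rpath (Ebar E H hH)) (is_boundary _) (shift_tail_eq _) +
     cls (rpath (EminusH E H hH)) (is_boundary _) (shift_tail_eq _))%type).
  apply card_sum with (p1 := pmap (Ebar E H hH) E (vm1 E H) (em1 E H))
                      (p2 := pmap (EminusH E H hH) E (vm2 E H) (em2 E H));
    try (intros; apply ste_refl); try apply ste_sym; try apply ste_trans.
  - apply pmap_bd; [apply hr1|apply hs1|apply sing_Eb_E].
  - apply pmap_bd; [apply hr2|apply hs2|apply sing_Q_E; exact sH].
  - intros; apply pmap_ste; [apply hr1|assumption].
  - intros; apply pmap_ste; [apply hr2|assumption].
  - intros b b' hb hb' r. eapply pmap_ste_rev; eauto; [apply hr1|apply Eb_inj].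
  - intros b b' hb hb' r. eapply pmap_ste_rev; eauto; [apply hr2|apply Q_inj].
  - intros b b' hb hb' r. apply (TH_ste E H hH) in r.
    + apply (TH2 E H hH b'). apply r. apply TH1. exact hb.
    + apply pmap_bd; [apply hr1|apply hs1|apply sing_Eb_E|exact hb].
    + apply pmap_bd; [apply hr2|apply hs2|apply sing_Q_E; exact sH|exact hb'].
  - apply surj.
Qed.
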